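(* (i) Suppose that $\rho$ is an NPT (non-positive partial transpose) bipartite state. For every vector $\ket{y}$ in the negative eigenspace of $\rho^\Gamma$ (the partial transpose of $\rho$ with respect to the first subsystem), let $\ket{y}\in\mathbb{C}^{m(y)}\otimes\mathbb{C}^{n(y)}$, i.e. $m(y)$ and $n(y)$ are the local dimensions of the space supporting $\ket{y}$, and denote $p=\min_{\ket{y}}\{m(y),n(y)\}$, the minimum taken over all $\ket{y}$ in the negative eigenspace of $\rho^\Gamma$. Then $\rho$ can be locally projected (by a product operator) to an NPT state supported on $\mathbb{C}^{p}\otimes\mathbb{C}^{p}$. (ii) Suppose that $W$ is a bipartite entanglement witness. For every vector $\ket{y}$ in the negative eigenspace of $W$, let $\ket{y}\in\mathbb{C}^{m(y)}\otimes\mathbb{C}^{n(y)}$, i.e. $m(y)$ and $n(y)$ are the local dimensions of the space supporting $\ket{y}$, and denote $p=\min_{\ket{y}}\{m(y),n(y)\}$, the minimum taken over all $\ket{y}$ in the negative eigenspace of $W$. Then $W$ can be locally projected (by a product operator) to an entanglement witness supported on $\mathbb{C}^{p}\otimes\mathbb{C}^{p}$.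
   Context: Bipartite quantum systems over the complex field. An entanglement witness (EW) is a Hermitian $W$ with $\mathrm{tr}(W\rho)\geq 0$ for all separable states $\rho$ and $\mathrm{tr}(W\sigma)<0$ for at least one entangled state $\sigma$. $M^\Gamma$ denotes the partial transpose of a bipartite matrix $M$ with respect to the first subsystem; a state $\rho$ is NPT if $\rho^\Gamma$ is not positive semidefinite. ''Locally projecting'' means applying a product operator $X=U\otimes V$ (e.g. a local unitary followed by a product projector $P=I_p\otimes I_p$) as $X M X^\dagger$. *)

(* Defs.v *)
(* Bipartite systems C^m (x) C^n over an arbitrary
   numClosedFieldType C (e.g. the complex numbers R[i]); bipartite index
   (i,j) <-> i*n+j via mathcomp-real-closed's mxtens_index, tensor product
   of matrices A *t B (Kronecker product, same convention). *)
From HB Require Import structures.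
From mathcomp Require Import all_boot all_order all_algebra.
From mathcomp Require Import mxtens.
Set Implicit Arguments.
Unset Strict Implicit.
Unset Printing Implicit Defensive.
Import Order.TTheory GRing.Theory Num.Theory.
Local Open Scope ring_scope.

Section Defs.
Variable C : numClosedFieldType.

Definition adjmx {k l : nat} (M : 'M[C]_(k, l)) : 'M[C]_(l, k) :=
  (map_mx Num.conj M)^T.

Definition hermitian {N : nat} (M : 'M[C]_N) : Prop := adjmx M = M.

Definition psd {N : nat} (M : 'M[C]_N) : Prop :=
  hermitian M /\ forall v : 'cV[C]_N, 0 <= (adjmx v *m M *m v) 0 0.

Definition is_state {N : nat} (M : 'M[C]_N) : Prop := psd M /\ \tr M = 1.

(* partial transpose w.r.t. the first subsystem:
   (M^Gamma)_{(i,j),(k,l)} = M_{(k,j),(i,l)} *)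
Definition ptrans (m n : nat) (M : 'M[C]_(m * n)) : 'M[C]_(m * n) :=
  \matrix_(a, b)
    M (mxtens_index ((mxtens_unindex b).1, (mxtens_unindex a).2))
      (mxtens_index ((mxtens_unindex a).1, (mxtens_unindex b).2)).

Definition NPT (m n : nat) (M : 'M[C]_(m * n)) : Prop := ~ psd (@ptrans m n M).

(* separable state: a state which is a (convex, after normalisation) sum of
   product pure states |a_i><a_i| (x) |b_i><b_i| *)
Definition separable (m n : nat) (S : 'M[C]_(m * n)) : Prop :=
  is_state S /\
  exists (k : nat) (a : 'I_k -> 'cV[C]_m) (b : 'I_k -> 'cV[C]_n),
    S = \sum_(i < k) ((a i *t b i) *m adjmx (a i *t b i)).

Definition entangled (m n : nat) (S : 'M[C]_(m * n)) : Prop :=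
  is_state S /\ ~ @separable m n S.

Definition is_EW (m n : nat) (W : 'M[C]_(m * n)) : Prop :=
  hermitian W /\
  (forall S : 'M[C]_(m * n), @separable m n S -> 0 <= \tr (W *m S)) /\
  (exists S : 'M[C]_(m * n), @entangled m n S /\ \tr (W *m S) < 0).

Definition in_neg_eigenspace {N : nat} (H : 'M[C]_N) (y : 'cV[C]_N) : Prop :=
  exists (k : nat) (lam : 'I_k -> C) (v : 'I_k -> 'cV[C]_N),
    (forall i, lam i < 0 /\ H *m v i = lam i *: v i) /\
    y = \sum_(i < k) v i.

Definition coefmx (m n : nat) (y : 'cV[C]_(m * n)) : 'M[C]_(m, n) :=
  \matrix_(i, j) y (mxtens_index (i, j)) 0.

(* local dimensions m(y), n(y) of the (smallest product) space supporting y: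
   ranks of the two reduced density operators of |y><y| *)
Definition locdimA (m n : nat) (y : 'cV[C]_(m * n)) : nat :=
  \rank (@coefmx m n y *m adjmx (@coefmx m n y)).
Definition locdimB (m n : nat) (y : 'cV[C]_(m * n)) : nat :=
  \rank ((@coefmx m n y)^T *m map_mx Num.conj (@coefmx m n y)).

Definition is_min_negdim (m n : nat) (H : 'M[C]_(m * n)) (p : nat) : Prop :=
  (exists y, y != 0 /\ in_neg_eigenspace H y /\
     p = minn (@locdimA m n y) (@locdimB m n y)) /\
  (forall y, y != 0 -> in_neg_eigenspace H y ->
     (p <= minn (@locdimA m n y) (@locdimB m n y))%N).

End Defs.

Arguments ptrans {C} m n M.

Arguments NPT {C} m n M.
Arguments separable {C} m n S.
Arguments entangled {C} m n S.
Arguments is_EW {C} m n W.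
Arguments coefmx {C} m n y.
Arguments locdimA {C} m n y.
Arguments locdimB {C} m n y.
Arguments is_min_negdim {C} m n H p.

(* Main.v *)
Require Import Defs.
From HB Require Import structures.
From mathcomp Require Import all_boot all_order all_algebra.
From mathcomp Require Import mxtens.
Set Implicit Arguments.
Unset Strict Implicit.
Unset Printing Implicit Defensive.
Import Order.TTheory GRing.Theory Num.Theory.
Local Open Scope ring_scope.

Section Helpers.
Variable C : numClosedFieldType.

Lemma adjmxK k l (M : 'M[C]_(k, l)) : adjmx (adjmx M) = M.
Proof. by apply/matrixP=> i j; rewrite /adjmx !mxE conjCK. Qed.

Lemma adjmx_mul k l r (A : 'M[C]_(k, l)) (B : 'M[C]_(l, r)) :
  adjmx (A *m B) = adjmx B *m adjmx A.
Proof. by rewrite /adjmx map_mxM trmx_mul. Qed.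

Lemma adjmx_tens k l r s (A : 'M[C]_(k, l)) (B : 'M[C]_(r, s)) :
  adjmx (A *t B) = adjmx A *t adjmx B.
Proof. by rewrite /adjmx map_mxT trmx_tens. Qed.

Lemma adjmxD k l (A B : 'M[C]_(k, l)) : adjmx (A + B) = adjmx A + adjmx B.
Proof. by apply/matrixP=> i j; rewrite /adjmx !mxE rmorphD. Qed.

Lemma adjmxZ k l c (A : 'M[C]_(k, l)) : adjmx (c *: A) = c^* *: adjmx A.
Proof. by apply/matrixP=> i j; rewrite /adjmx !mxE rmorphM. Qed.

Lemma adjmx0 k l : adjmx (0 : 'M[C]_(k, l)) = 0.
Proof. by apply/matrixP=> i j; rewrite /adjmx !mxE rmorph0. Qed.

Lemma adjmx_sum k l I (r : seq I) (P : pred I) (F : I -> 'M[C]_(k, l)) :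
  adjmx (\sum_(i <- r | P i) F i) = \sum_(i <- r | P i) adjmx (F i).
Proof. exact: (big_morph _ (@adjmxD k l) (@adjmx0 k l)). Qed.

Lemma adjmx_entry k l (A : 'M[C]_(k, l)) i j : adjmx A j i = (A i j)^*.
Proof. by rewrite /adjmx !mxE. Qed.

Lemma adjmx_delta k (a : 'I_k) : adjmx (delta_mx a 0 : 'cV[C]_k) = delta_mx 0 a.
Proof.
apply/matrixP=> i j; rewrite /adjmx !mxE.
by case: (_ == _); case: (_ == _); rewrite /= ?rmorph1 ?rmorph0.
Qed.

Lemma normsq_col k (v : 'cV[C]_k) :
  (adjmx v *m v) 0 0 = \sum_i (v i 0) * (v i 0)^*.
Proof. by rewrite !mxE; apply: eq_bigr=> i _; rewrite adjmx_entry mulrC. Qed.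

Lemma normsq_ge0 k (v : 'cV[C]_k) : 0 <= (adjmx v *m v) 0 0.
Proof. by rewrite normsq_col; apply: sumr_ge0=> i _; apply: mul_conjC_ge0. Qed.

Lemma normsq_eq0 k (v : 'cV[C]_k) : (adjmx v *m v) 0 0 = 0 -> v = 0.
Proof.
rewrite normsq_col => H; apply/matrixP=> i j; rewrite ord1 mxE.
have := psumr_eq0P (fun i _ => mul_conjC_ge0 (v i 0)) H.
by move=> /(_ i isT) /eqP; rewrite mul_conjC_eq0 => /eqP.
Qed.

Lemma normsq_row_eq0 k (u : 'rV[C]_k) : (u *m adjmx u) 0 0 = 0 -> u = 0.
Proof.
move=> H; rewrite -[u]adjmxK; have -> : adjmx u = 0; last by rewrite adjmx0.
by apply: normsq_eq0; rewrite adjmxK.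
Qed.

Lemma rank_adj k l (M : 'M[C]_(k, l)) : \rank (M *m adjmx M) = \rank M.
Proof.
have := mxrank_mul_ker M (adjmx M).
set S := (M :&: _)%MS.
suff -> : S = 0 by rewrite mxrank0 addn0.
apply/row_matrixP=> i; rewrite row0.
have uS : (row i S <= S)%MS by apply: row_sub.
have /submxP [w Hw] : (row i S <= M)%MS by apply: submx_trans uS (capmxSl _ _).
have /sub_kermxP Hk : (row i S <= kermx (adjmx M))%MS.
  by apply: submx_trans uS (capmxSr _ _).
apply: normsq_row_eq0.
by rewrite {2}Hw adjmx_mul mulmxA Hk mul0mx mxE.
Qed.


Lemma sum_tens (R : nmodType) m n (F : 'I_(m * n) -> R) :
  \sum_(b < m * n) F b = \sum_(i < m) \sum_(j < n) F (mxtens_index (i, j)).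
Proof.
rewrite pair_big /= (reindex (@mxtens_index m n)) /=.
  by apply: eq_bigr=> [[i j]].
by exists (@mxtens_unindex m n)=> i _; rewrite (mxtens_indexK, mxtens_unindexK).
Qed.

Lemma ptrans_tens m n (A : 'M[C]_m) (B : 'M[C]_n) :
  ptrans m n (A *t B) = A^T *t B.
Proof. by apply/matrixP=> a b; rewrite !mxE !mxtens_indexK /=. Qed.

Lemma ptransD m n (A B : 'M[C]_(m * n)) :
  ptrans m n (A + B) = ptrans m n A + ptrans m n B.
Proof. by apply/matrixP=> a b; rewrite !mxE. Qed.

Lemma ptrans0 m n : ptrans m n (0 : 'M[C]_(m * n)) = 0.
Proof. by apply/matrixP=> a b; rewrite !mxE. Qed.

Lemma ptransZ m n c (A : 'M[C]_(m * n)) :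
  ptrans m n (c *: A) = c *: ptrans m n A.
Proof. by apply/matrixP=> a b; rewrite !mxE. Qed.

Lemma ptrans_sum m n I (r : seq I) (P : pred I) (F : I -> 'M[C]_(m * n)) :
  ptrans m n (\sum_(i <- r | P i) F i) = \sum_(i <- r | P i) ptrans m n (F i).
Proof. exact: (big_morph _ (@ptransD m n) (@ptrans0 m n)). Qed.

Lemma delta_tens m n (r t : 'I_m) (s u : 'I_n) :
  delta_mx (mxtens_index (r, s)) (mxtens_index (t, u)) =
  (delta_mx r t : 'M[C]_m) *t (delta_mx s u : 'M[C]_n).
Proof.
apply/matrixP=> a b.
case: (mxtens_indexP a)=> i j; case: (mxtens_indexP b)=> k l.
rewrite tensmxE !mxE !(inj_eq (can_inj (@mxtens_indexK m n))) !xpair_eqE.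
by case: (i == r); case: (j == s); case: (k == t); case: (l == u);
   rewrite /= ?mulr1 ?mulr0 ?mul0r.
Qed.

Lemma ptrans_sand m n p q (X : 'M[C]_(p, m)) (Y : 'M[C]_(q, n))
  (X' : 'M[C]_(m, p)) (Y' : 'M[C]_(n, q)) (M : 'M[C]_(m * n)) :
  ptrans p q ((X *t Y) *m M *m (X' *t Y')) =
  (X'^T *t Y) *m ptrans m n M *m (X^T *t Y').
Proof.
rewrite [M]matrix_sum_delta.
rewrite mulmx_sumr mulmx_suml ptrans_sum [ptrans m n _]ptrans_sum mulmx_sumr mulmx_suml.
apply: eq_bigr=> a _.
rewrite mulmx_sumr mulmx_suml ptrans_sum [ptrans m n _]ptrans_sum mulmx_sumr mulmx_suml.
apply: eq_bigr=> b _.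
rewrite [ptrans m n _]ptransZ -!scalemxAr -!scalemxAl ptransZ; congr (_ *: _).
case: (mxtens_indexP a)=> r s; case: (mxtens_indexP b)=> t u.
rewrite delta_tens !tensmx_mul !ptrans_tens !tensmx_mul !trmx_mul mulmxA.
by [].
Qed.

Lemma ptrans_adj m n (M : 'M[C]_(m * n)) :
  adjmx (ptrans m n M) = ptrans m n (adjmx M).
Proof. by apply/matrixP=> a b; rewrite /adjmx !mxE. Qed.

Lemma qf_sand k l (X : 'M[C]_(k, l)) (M : 'M[C]_l) (v : 'cV[C]_k) :
  adjmx v *m (X *m M *m adjmx X) *m v =
  adjmx (adjmx X *m v) *m M *m (adjmx X *m v).
Proof. by rewrite adjmx_mul adjmxK !mulmxA. Qed.


Lemma mxE_add k l (A B : 'M[C]_(k, l)) i j : (A + B) i j = A i j + B i j.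
Proof. by rewrite mxE. Qed.
Lemma mxE_scale k l c (A : 'M[C]_(k, l)) i j : (c *: A) i j = c * A i j.
Proof. by rewrite mxE. Qed.

Lemma qf_delta k (M : 'M[C]_k) a b :
  (adjmx (delta_mx a 0 : 'cV[C]_k) *m M *m (delta_mx b 0 : 'cV[C]_k)) 0 0 = M a b.
Proof. by rewrite adjmx_delta -rowE -colE !mxE. Qed.

Lemma herm_entry k (M : 'M[C]_k) (a b : 'I_k) : Defs.hermitian M -> M b a = (M a b)^*.
Proof. by move=> H; rewrite -{1}H adjmx_entry. Qed.

Lemma psd_diag k (M : 'M[C]_k) (a : 'I_k) : psd M -> 0 <= M a a.
Proof. by case=> _ H; rewrite -qf_delta; apply: H. Qed.

Lemma psd_tr_ge0 k (M : 'M[C]_k) : psd M -> 0 <= \tr M.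
Proof. by move=> H; apply: sumr_ge0=> a _; apply: psd_diag. Qed.

Lemma psd_zero_diag k (M : 'M[C]_k) :
  psd M -> (forall a, M a a = 0) -> M = 0.
Proof.
move=> [Hh Hq] Hd; apply/matrixP=> a b; rewrite mxE.
pose c := - M a b.
pose x : 'cV[C]_k := c *: delta_mx a 0 + delta_mx b 0.
have := Hq x.
rewrite /x adjmxD adjmxZ !mulmxDl !mulmxDr -!scalemxAl -!scalemxAr !mxE_add !mxE_scale.
rewrite !qf_delta !Hd (herm_entry a b Hh) /c rmorphN /= !mulr0 !add0r addr0.
set N := M a b * (M a b)^*.
have N0 : 0 <= N by apply: mul_conjC_ge0.
have -> : - (M a b)^* * M a b + - M a b * (M a b)^* = - (N + N).
  by rewrite /N !mulNr mulrC opprD.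
rewrite oppr_ge0 => HN.
have : N + N = 0 by apply/le_anti; rewrite HN addr_ge0.
move/eqP; rewrite paddr_eq0 // => /andP [/eqP HN0 _].
by move/eqP: HN0; rewrite /N mul_conjC_eq0 => /eqP.
Qed.

Lemma psd_tr0 k (M : 'M[C]_k) : psd M -> \tr M = 0 -> M = 0.
Proof.
move=> H Ht; apply: psd_zero_diag => // a.
by apply: (psumr_eq0P (fun a _ => psd_diag a H) Ht).
Qed.

Lemma psd_sand k l (X : 'M[C]_(k, l)) (M : 'M[C]_l) :
  psd M -> psd (X *m M *m adjmx X).
Proof.
move=> [Hh Hq]; split.
  by rewrite /Defs.hermitian !adjmx_mul adjmxK Hh mulmxA.
by move=> v; rewrite qf_sand.
Qed.

Lemma real_ge0_conj (c : C) : 0 <= c -> c^* = c.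
Proof. by move=> H; apply: conj_Creal; apply: ger0_real. Qed.

Lemma psd_scale k (M : 'M[C]_k) c : 0 <= c -> psd M -> psd (c *: M).
Proof.
move=> Hc [Hh Hq]; split.
  by rewrite /Defs.hermitian adjmxZ Hh real_ge0_conj.
by move=> v; rewrite -scalemxAr -scalemxAl mxE mulr_ge0.
Qed.

Lemma mx11_mul k (A : 'M[C]_(1, k)) (B : 'M[C]_(k, 1)) (D : 'M[C]_(1, 1)) :
  (D *m (A *m B)) 0 0 = D 0 0 * (A *m B) 0 0.
Proof. by rewrite [in LHS]mxE big_ord1. Qed.

Lemma adjmx_11 (A : 'M[C]_(1, 1)) : adjmx A 0 0 = (A 0 0)^*.
Proof. by rewrite adjmx_entry. Qed.

Lemma qf_rank1 k (u v : 'cV[C]_k) :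
  (adjmx v *m (u *m adjmx u) *m v) 0 0 =
  ((adjmx u *m v) 0 0)^* * (adjmx u *m v) 0 0.
Proof.
rewrite !mulmxA -(mulmxA _ _ v) mx11_mul; congr (_ * _).
by rewrite -adjmx_11 adjmx_mul adjmxK.
Qed.

Lemma psd_sum_rank1 k I (r : seq I) (u : I -> 'cV[C]_k) :
  psd (\sum_(i <- r) u i *m adjmx (u i)).
Proof.
split.
  rewrite /Defs.hermitian adjmx_sum; apply: eq_bigr=> i _.
  by rewrite adjmx_mul adjmxK.
move=> v; rewrite mulmx_sumr mulmx_suml summxE; apply: sumr_ge0=> i _.
by rewrite qf_rank1 mulrC mul_conjC_ge0.
Qed.

Lemma tr_rank1 k (u : 'cV[C]_k) : \tr (u *m adjmx u) = (adjmx u *m u) 0 0.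
Proof. by rewrite mxtrace_mulC /mxtrace big_ord1. Qed.

Lemma tr_W_rank1 k (W : 'M[C]_k) (u : 'cV[C]_k) :
  \tr (W *m (u *m adjmx u)) = (adjmx u *m W *m u) 0 0.
Proof. by rewrite mulmxA mxtrace_mulC /mxtrace big_ord1 mulmxA. Qed.


Lemma bilin_sum N k (v : 'I_k -> 'cV[C]_N) (c d : 'I_k -> C) :
  (adjmx (\sum_i c i *: v i) *m (\sum_j d j *: v j)) 0 0 =
  \sum_i \sum_j (c i)^* * d j * (adjmx (v i) *m v j) 0 0.
Proof.
rewrite adjmx_sum mulmx_suml summxE; apply: eq_bigr=> i _.
rewrite mulmx_sumr summxE; apply: eq_bigr=> j _.
by rewrite adjmxZ -scalemxAl -scalemxAr !mxE_scale mulrA.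
Qed.

Lemma neg_form N (H : 'M[C]_N) y :
  Defs.hermitian H -> in_neg_eigenspace H y -> y != 0 ->
  (adjmx y *m H *m y) 0 0 < 0.
Proof.
move=> Hh [k [lam [v [Hv Hy]]]] y0.
pose g i j := (adjmx (v i) *m v j) 0 0.
have lreal i : lam i \is Num.real by apply: ltr0_real; case: (Hv i).
have Hg i j : g i j != 0 -> lam i = lam j.
  move=> gn0.
  have E1 : (adjmx (v i) *m H *m v j) 0 0 = lam j * g i j.
    by rewrite -mulmxA (Hv j).2 -scalemxAr mxE_scale.
  have E2 : (adjmx (v i) *m H *m v j) 0 0 = lam i * g i j.
    rewrite -{1}Hh -adjmx_mul (Hv i).2 adjmxZ -scalemxAl mxE_scale.
    by rewrite conj_Creal.
  apply/eqP; rewrite -subr_eq0; apply/eqP.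
  have : (lam i - lam j) * g i j = 0 by rewrite mulrBl -E1 -E2 subrr.
  by move/eqP; rewrite mulf_eq0 (negbTE gn0) orbF => /eqP.
pose f i := sqrtC (- lam i).
have f_gt0 i : 0 < f i by rewrite sqrtC_gt0 oppr_gt0; case: (Hv i).
have ff i : f i * f i = - lam i by rewrite -expr2 sqrtCK.
have fc i : (f i)^* = f i by apply: real_ge0_conj; apply: ltW.
have fn0 i : f i != 0 by rewrite gt_eqF.
have fcV i : ((f i)^-1)^* = (f i)^-1.
  by apply: real_ge0_conj; rewrite invr_ge0 ltW.
have Hsum : y = \sum_i 1 *: v i by rewrite Hy; apply: eq_bigr=> i _; rewrite scale1r.
pose w := \sum_j f j *: v j.
have Hq : (adjmx y *m H *m y) 0 0 = - (adjmx w *m w) 0 0.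
  rewrite -mulmxA {2}Hy mulmx_sumr.
  under eq_bigr => j _ do rewrite (Hv j).2.
  rewrite Hsum bilin_sum bilin_sum -sumrN; apply: eq_bigr=> i _.
  rewrite -sumrN; apply: eq_bigr=> j _.
  have [g0|gn0] := eqVneq (g i j) 0.
    by rewrite /g in g0; rewrite g0 !mulr0 oppr0.
  have Hl := Hg i j gn0.
  by rewrite fc /f Hl -/(f j) ff rmorph1 mul1r mulNr opprK.
have ww0 : (adjmx w *m w) 0 0 != 0.
  apply/negP=> /eqP /normsq_eq0 w0.
  pose y' := \sum_i (f i)^-1 *: v i.
  have : (adjmx y *m y) 0 0 = (adjmx y' *m w) 0 0.
    rewrite /y' /w Hsum !bilin_sum; apply: eq_bigr=> i _; apply: eq_bigr=> j _.
    have [g0|gn0] := eqVneq (g i j) 0.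
      by rewrite /g in g0; rewrite g0 !mulr0.
    have Hl := Hg i j gn0.
    by rewrite rmorph1 fcV /f Hl -/(f j) mulVf // mul1r.
  rewrite w0 mulmx0 => H0.
  have y00 : y = 0 by apply: normsq_eq0; rewrite H0 mxE.
  by move: y0; rewrite y00 eqxx.
rewrite Hq oppr_lt0 lt_def ww0 normsq_ge0.
by [].
Qed.


Lemma mxtrace_sum k I (r : seq I) (P : pred I) (F : I -> 'M[C]_k) :
  \tr (\sum_(i <- r | P i) F i) = \sum_(i <- r | P i) \tr (F i).
Proof. exact: (big_morph _ (@mxtraceD _ k) (@mxtrace0 _ k)). Qed.

Lemma tens_scale k l r s c (A : 'M[C]_(k, l)) (B : 'M[C]_(r, s)) :
  (c *: A) *t B = c *: (A *t B).
Proof. by apply/matrixP=> i j; rewrite !mxE mulrA. Qed.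

Lemma locdim_eq m n (y : 'cV[C]_(m * n)) :
  minn (locdimA m n y) (locdimB m n y) = \rank (coefmx m n y).
Proof.
rewrite /locdimA /locdimB rank_adj.
have -> : map_mx Num.conj (coefmx m n y) = adjmx (coefmx m n y)^T.
  by apply/matrixP=> i j; rewrite /adjmx !mxE.
by rewrite rank_adj mxrank_tr minnn.
Qed.

Definition zmax (r : nat) : 'cV[C]_(r * r) :=
  \matrix_(a, b) (((@mxtens_unindex r r a).1 == (@mxtens_unindex r r a).2)%:R).

Lemma factor m n (y : 'cV[C]_(m * n)) :
  (col_base (coefmx m n y) *t (row_base (coefmx m n y))^T) *m
     zmax (\rank (coefmx m n y)) = y.
Proof.
set Y := coefmx m n y.
apply/matrixP=> a b; rewrite [b]ord1.
case: (mxtens_indexP a)=> i j.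
rewrite mxE sum_tens.
have -> : y (mxtens_index (i, j)) 0 = (col_base Y *m row_base Y) i j.
  by rewrite mulmx_base /Y mxE.
rewrite mxE; apply: eq_bigr=> k _.
rewrite (bigD1 k) //= big1 ?addr0.
  by rewrite tensmxE !mxE mxtens_indexK eqxx mulr1.
move=> l lk; rewrite tensmxE [zmax _ _ _]mxE mxtens_indexK /=.
by rewrite eq_sym (negbTE lk) mulr0.
Qed.

Lemma psd_rank1 k (u : 'cV[C]_k) : psd (u *m adjmx u).
Proof. by have := psd_sum_rank1 [:: tt] (fun _ => u); rewrite big_seq1. Qed.

Lemma EW_core m n (W : 'M[C]_(m * n)) :
  (forall S, separable m n S -> 0 <= \tr (W *m S)) ->
  forall k (a : 'I_k -> 'cV[C]_m) (b : 'I_k -> 'cV[C]_n),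
  0 <= \sum_i (adjmx (a i *t b i) *m W *m (a i *t b i)) 0 0.
Proof.
move=> Hs k a b.
pose t := \sum_i (adjmx (a i *t b i) *m (a i *t b i)) 0 0.
have t0 : 0 <= t by apply: sumr_ge0=> i _; apply: normsq_ge0.
have [tz|tnz] := eqVneq t 0.
  rewrite big1 // => i _.
  have := psumr_eq0P (fun i _ => normsq_ge0 (a i *t b i)) tz.
  by move=> /(_ i isT) /normsq_eq0 ->; rewrite mulmx0 mxE.
have tp : 0 < t by rewrite lt_def tnz t0.
pose s := sqrtC (t^-1).
have ss : s * s^* = t^-1.
  rewrite real_ge0_conj ?sqrtC_ge0 ?invr_ge0 //.
  by rewrite -expr2 sqrtCK.
have E i : ((s *: a i) *t b i) *m adjmx ((s *: a i) *t b i) =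
    t^-1 *: ((a i *t b i) *m adjmx (a i *t b i)).
  by rewrite tens_scale adjmxZ -scalemxAl -scalemxAr scalerA ss.
pose S := \sum_i ((s *: a i) *t b i) *m adjmx ((s *: a i) *t b i).
have HS : separable m n S.
  split; last by exists k, (fun i => s *: a i), b.
  split; first exact: psd_sum_rank1.
  rewrite mxtrace_sum.
  under eq_bigr => i _ do rewrite E mxtraceZ tr_rank1.
  by rewrite -mulr_sumr mulVf.
have := Hs S HS.
rewrite mulmx_sumr mxtrace_sum.
under eq_bigr => i _ do rewrite E -scalemxAr mxtraceZ tr_W_rank1.
by rewrite -mulr_sumr pmulr_rge0 // invr_gt0.
Qed.

End Helpers.

Unset Implicit Arguments.

Theorem lemma10 (C : numClosedFieldType) (m n : nat) :
  (* (i) NPT states *)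
  (forall (rho : 'M[C]_(m * n)) (p : nat),
     is_state rho -> NPT m n rho ->
     is_min_negdim m n (ptrans m n rho) p ->
     exists (A : 'M[C]_(p, m)) (B : 'M[C]_(p, n)),
       let sigma := (A *t B) *m rho *m adjmx (A *t B) in
       is_state ((\tr sigma)^-1 *: sigma) /\ NPT p p sigma) /\
  (* (ii) entanglement witnesses *)
  (forall (W : 'M[C]_(m * n)) (p : nat),
     is_EW m n W ->
     is_min_negdim m n W p ->
     exists (A : 'M[C]_(p, m)) (B : 'M[C]_(p, n)),
       is_EW p p ((A *t B) *m W *m adjmx (A *t B))).
Proof.
split.
- move=> rho p [Hpsd Htr] _ [[y [y0 [Hy Hp]]] _].
  rewrite locdim_eq in Hp; subst p.
  set Y := coefmx m n y.
  set r := \rank Y.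
  pose P := col_base Y; pose Q := row_base Y.
  exists P^T, (map_mx Num.conj Q) => sigma.
  pose G := (adjmx P^T)^T *t map_mx Num.conj Q.
  have HG : adjmx G = P *t Q^T.
    rewrite adjmx_tens; congr (_ *t _); apply/matrixP=> i j;
    by rewrite /adjmx !mxE conjCK.
  have Hpt : ptrans r r sigma = G *m ptrans m n rho *m adjmx G.
    rewrite /sigma adjmx_tens ptrans_sand HG /G trmxK; congr (_ *m (_ *t _));
      apply/matrixP=> i j; rewrite /adjmx !mxE ?conjCK ?mxE //.
  have Hz : adjmx G *m zmax C r = y by rewrite HG /P /Q /r factor.
  have Hherm : Defs.hermitian (ptrans m n rho).
    by rewrite /Defs.hermitian ptrans_adj; case: Hpsd => ->.
  have Hneg : (adjmx (zmax C r) *m ptrans r r sigma *m zmax C r) 0 0 < 0.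
    by rewrite Hpt qf_sand Hz; apply: neg_form.
  have Spsd : psd sigma by apply: psd_sand.
  split; last first.
    by move=> [_ Hq]; move: (Hq (zmax C r)); rewrite lt_geF.
  have t0 : \tr sigma != 0.
    apply/negP=> /eqP /(psd_tr0 Spsd) s0.
    by move: Hneg; rewrite s0 ptrans0 mulmx0 mul0mx mxE ltxx.
  split.
    apply: psd_scale => //; rewrite invr_ge0; exact: psd_tr_ge0.
  by rewrite mxtraceZ mulVf.
- move=> W p [Hh [Hsep _]] [[y [y0 [Hy Hp]]] _].
  rewrite locdim_eq in Hp; subst p.
  set Y := coefmx m n y.
  set r := \rank Y.
  pose P := col_base Y; pose Q := row_base Y.
  exists (adjmx P), (adjmx Q^T).
  set X := adjmx P *t adjmx Q^T.
  have HX : adjmx X = P *t Q^T by rewrite /X adjmx_tens !adjmxK.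
  have Hz : adjmx X *m zmax C r = y by rewrite HX /P /Q /r factor.
  have Hq : (adjmx y *m W *m y) 0 0 < 0 by apply: neg_form.
  have Hsep' : forall S : 'M[C]_(r * r), separable r r S ->
      0 <= \tr (X *m W *m adjmx X *m S).
    move=> S HS; have HS' := HS; case: HS' => _ [k [a [b ->]]].
    rewrite mulmx_sumr mxtrace_sum.
    have E i : \tr (X *m W *m adjmx X *m ((a i *t b i) *m adjmx (a i *t b i))) =
      (adjmx ((P *m a i) *t (Q^T *m b i)) *m W *m ((P *m a i) *t (Q^T *m b i))) 0 0.
      rewrite tr_W_rank1 qf_sand HX.
      have -> : (P *t Q^T) *m (a i *t b i) = (P *m a i) *t (Q^T *m b i) :> 'cV[C]_(m * n)
        by exact: (@tensmx_mul C m r n r 1 1 P Q^T (a i) (b i)).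
      by [].
    rewrite (eq_bigr _ (fun i _ => E i)).
    exact: (EW_core Hsep).
  split.
    by rewrite /Defs.hermitian !adjmx_mul adjmxK Hh mulmxA.
  split; first exact: Hsep'.
  set z := zmax C r.
  have zn0 : z != 0.
    apply/negP=> /eqP z0; apply: (negP y0); apply/eqP; rewrite -Hz -/z z0 mulmx0 //.
  set nz := (adjmx z *m z) 0 0.
  have nzp : 0 < nz.
    rewrite lt_def normsq_ge0 andbT; apply/negP=> /eqP /normsq_eq0 z0.
    by move: zn0; rewrite z0 eqxx.
  pose S1 := nz^-1 *: (z *m adjmx z).
  have Htr : \tr (X *m W *m adjmx X *m S1) < 0.
    rewrite /S1 -scalemxAr mxtraceZ tr_W_rank1 qf_sand Hz pmulr_rlt0 //.
    by rewrite invr_gt0.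
  have Hst : is_state S1.
    split; first by apply: psd_scale; [rewrite invr_ge0 ltW | exact: psd_rank1].
    by rewrite mxtraceZ tr_rank1 mulVf // gt_eqF.
  exists S1; split => //; split => // HS.
  by move: (Hsep' S1 HS); rewrite lt_geF.
Qed.
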